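(* Let $a<b$, $\lambda>0$, let $H(y):=\tfrac12\left(\tfrac12 y^2-\lambda\right)^2$ for $y\in\mathbb{R}$, let $\theta\in C[a,b]$ with $\min_{[a,b]}\theta>0$, and let $F\in C^1[a,b]$ with $F(a)=F(b)=0$, $F(x)\neq0$ for $x\in(a,b)$ and $\|F\|_\infty<(2\lambda/3)^{3/2}$. Let $X:=C_0[a,b]:=\{v\in C[a,b]\mid v(a)=v(b)=0\}$ and $K:X\to\mathbb{R}$, $K(v):=\int_a^b\theta\cdot(H\circ v-Fv)$. For $A\in\left(-(2\lambda/3)^{3/2},(2\lambda/3)^{3/2}\right)$ let $z_2(A)$ denote the unique solution in $\left(-\sqrt{2\lambda/3},\sqrt{2\lambda/3}\right)$ of $z\left(\tfrac12z^2-\lambda\right)=A$, and let $\overline v:=z_2\circ F$ (the unique stationary point of $K$). Then $\overline v$ is a local maximizer of $K$ with respect to the norm $\|\cdot\|_\infty$ on $X$, and $\overline v$ is not a local extremum point (neither local minimizer nor local maximizer) of $K$ with respect to the norm $\|\cdot\|_p$ on $X$ for any $p\in[1,4)$.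
   Context: $\|\cdot\|_p$ denotes the $L^p(a,b)$-norm restricted to $X$; $\|\cdot\|_\infty$ is the supremum norm. A stationary point of $K$ is a $v\in X$ with $\int_a^b\theta\left[v\left(\tfrac12v^2-\lambda\right)-F\right]h=0$ for all $h\in X$. *)

(* Defs.v *)
From Stdlib Require Import Reals.
From Coquelicot Require Import Coquelicot.
Open Scope R_scope.

Definition Icc (a b : R) : R -> Prop := fun x => a <= x <= b.

Definition cont_on (a b : R) (f : R -> R) : Prop :=
  forall x, a <= x <= b ->
    filterlim f (within (Icc a b) (locally x)) (locally (f x)).

Definition C1_on (a b : R) (f : R -> R) : Prop :=
  exists f' : R -> R, cont_on a b f' /\
    forall x, a <= x <= b ->
      filterlim (fun y => (f y - f x) / (y - x))
        (within (fun y => a <= y <= b /\ y <> x) (locally x)) (locally (f' x)).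

Definition C0 (a b : R) (v : R -> R) : Prop :=
  cont_on a b v /\ v a = 0 /\ v b = 0.

Definition Hfun (lam y : R) : R := / 2 * (/ 2 * y ^ 2 - lam) ^ 2.

Definition Kfun (a b lam : R) (theta F : R -> R) (v : R -> R) : R :=
  RInt (fun x => theta x * (Hfun lam (v x) - F x * v x)) a b.

Definition sup_norm (a b : R) (v : R -> R) : R :=
  real (Lub_Rbar (fun r => exists x, a <= x <= b /\ r = Rabs (v x))).

(* x^p for x >= 0, p > 0, with 0^p = 0 (Stdlib's Rpower 0 p = 1) *)
Definition rpow (x p : R) : R := if Rle_dec x 0 then 0 else Rpower x p.

Definition Lp_norm (a b p : R) (v : R -> R) : R :=
  rpow (RInt (fun x => rpow (Rabs (v x)) p) a b) (/ p).

Definition is_local_max (X : (R -> R) -> Prop) (N : (R -> R) -> R)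
  (K : (R -> R) -> R) (v : R -> R) : Prop :=
  X v /\ exists d, 0 < d /\
    forall w, X w -> N (fun x => w x - v x) < d -> K w <= K v.

Definition is_local_min (X : (R -> R) -> Prop) (N : (R -> R) -> R)
  (K : (R -> R) -> R) (v : R -> R) : Prop :=
  X v /\ exists d, 0 < d /\
    forall w, X w -> N (fun x => w x - v x) < d -> K v <= K w.

(* Main.v *)
Require Import Defs.
From Stdlib Require Import Reals Lra Psatz FunctionalExtensionality.
From Coquelicot Require Import Coquelicot.
Open Scope R_scope.

Lemma cR_plus (f g : R -> R) (x:R) : continuous f x -> continuous g x -> continuous (fun y => f y + g y) x.
Proof. intros; exact (continuous_plus f g x H H0). Qed.
Lemma cR_mult (f g : R -> R) (x:R) : continuous f x -> continuous g x -> continuous (fun y => f y * g y) x.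
Proof. intros; exact (continuous_mult f g x H H0). Qed.
Lemma cR_opp (f : R -> R) (x:R) : continuous f x -> continuous (fun y => - f y) x.
Proof. intros; exact (continuous_opp f x H). Qed.
Lemma cR_minus (f g : R -> R) (x:R) : continuous f x -> continuous g x -> continuous (fun y => f y - g y) x.
Proof. intros; apply cR_plus; auto; apply cR_opp; auto. Qed.
Lemma cR_const (c x : R) : continuous (fun _ : R => c) x.
Proof. apply continuous_const. Qed.
Lemma cR_id (x : R) : continuous (fun y : R => y) x.
Proof. apply continuous_id. Qed.
Lemma cR_comp (f g : R -> R) x : continuous f x -> continuous g (f x) -> continuous (fun y => g (f y)) x.
Proof. intros; exact (continuous_comp f g x H H0). Qed.
Lemma cR_abs (f : R -> R) (x:R) : continuous f x -> continuous (fun y => Rabs (f y)) x.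
Proof. intros; apply cR_comp; auto; apply continuous_Rabs. Qed.
Lemma cR_pow (f : R -> R) n (x:R) : continuous f x -> continuous (fun y => f y ^ n) x.
Proof. intros H; induction n; simpl. apply cR_const. apply cR_mult; auto. Qed.
Lemma cR_H lam (f : R -> R) (x:R) : continuous f x -> continuous (fun y => Hfun lam (f y)) x.
Proof. intros; apply cR_comp; auto. apply (ex_derive_continuous (V:=R_NormedModule) (fun y => Hfun lam y)). unfold Hfun. auto_derive. auto. Qed.

Definition clamp (a b x : R) := Rmax a (Rmin b x).
Lemma clamp_in a b x : a <= b -> a <= clamp a b x <= b.
Proof. intros; unfold clamp, Rmax, Rmin; repeat destruct Rle_dec; lra. Qed.
Lemma clamp_id a b x : a <= x <= b -> clamp a b x = x.
Proof. intros; unfold clamp, Rmax, Rmin; repeat destruct Rle_dec; lra. Qed.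
Lemma clamp_lip a b x y : a <= b -> Rabs (clamp a b y - clamp a b x) <= Rabs (y - x).
Proof. intros; unfold clamp, Rmax, Rmin; repeat destruct Rle_dec; unfold Rabs; repeat destruct Rcase_abs; lra. Qed.

Lemma ball_R (x y e : R) : ball x e y <-> Rabs (y - x) < e.
Proof. reflexivity. Qed.

Ltac rb H := let H' := fresh in pose proof (proj1 (ball_R _ _ _) H) as H'; clear H; rename H' into H.

Lemma clamp_cont a b x : a <= b -> continuous (clamp a b) x.
Proof.
  intros Hab. unfold continuous. apply filterlim_locally. intros eps.
  exists eps. intros y Hy. apply ball_R in Hy. apply ball_R.
  eapply Rle_lt_trans. apply clamp_lip; auto. auto.
Qed.

Definition cc (a b : R) (f : R -> R) := forall x, continuous (fun y => f (clamp a b y)) x.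

Lemma cont_on_cc a b f : a <= b -> cont_on a b f -> cc a b f.
Proof.
  intros Hab Hf x. unfold continuous.
  eapply filterlim_comp with (G := within (Icc a b) (locally (clamp a b x))).
  - intros P HP. unfold filtermap. simpl.
    unfold within in HP. generalize (clamp_cont a b x Hab (fun y => Icc a b y -> P y) HP). unfold filtermap.
    apply filter_imp. intros y Hy. apply Hy. apply clamp_in; auto.
  - apply Hf. apply clamp_in; auto.
Qed.

Lemma cc_ex_RInt a b f : a <= b -> cc a b f -> ex_RInt f a b.
Proof.
  intros Hab Hf. apply ex_RInt_ext with (fun y => f (clamp a b y)).
  - intros x. rewrite Rmin_left, Rmax_right by lra. intros. rewrite clamp_id; auto; lra.
  - apply (ex_RInt_continuous (V:=R_CompleteNormedModule)). intros; apply Hf.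
Qed.

Lemma cc_glob a b (f : R -> R) : a <= b -> (forall x, continuous f x) -> cc a b f.
Proof. intros Hab H x. apply cR_comp; auto. apply clamp_cont; auto. Qed.
Lemma cc_plus a b f g : cc a b f -> cc a b g -> cc a b (fun x => f x + g x).
Proof. intros H1 H2 x. apply cR_plus; auto. Qed.
Lemma cc_minus a b f g : cc a b f -> cc a b g -> cc a b (fun x => f x - g x).
Proof. intros H1 H2 x. apply cR_minus; auto. Qed.
Lemma cc_mult a b f g : cc a b f -> cc a b g -> cc a b (fun x => f x * g x).
Proof. intros H1 H2 x. apply cR_mult; auto. Qed.
Lemma cc_comp a b f h : cc a b f -> (forall y, continuous h y) -> cc a b (fun x => h (f x)).
Proof. intros H1 H2 x. apply cR_comp; auto. Qed.

Lemma cc_max a b f : a <= b -> cc a b f ->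
  exists x0, a <= x0 <= b /\ forall x, a <= x <= b -> f x <= f x0.
Proof.
  intros Hab Hf. destruct (continuity_ab_maj (fun y => f (clamp a b y)) a b Hab) as [M [HM HMi]].
  intros c _. apply continuity_pt_filterlim. apply Hf.
  exists M. split; auto. intros x Hx. specialize (HM x Hx). rewrite !clamp_id in HM; auto.
Qed.
Lemma cc_min a b f : a <= b -> cc a b f ->
  exists x0, a <= x0 <= b /\ forall x, a <= x <= b -> f x0 <= f x.
Proof.
  intros Hab Hf. destruct (continuity_ab_min (fun y => f (clamp a b y)) a b Hab) as [M [HM HMi]].
  intros c _. apply continuity_pt_filterlim. apply Hf.
  exists M. split; auto. intros x Hx. specialize (HM x Hx). rewrite !clamp_id in HM; auto.
Qed.

Lemma sup_ge a b g : a <= b -> cc a b g -> forall x, a <= x <= b -> Rabs (g x) <= sup_norm a b g.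
Proof.
  intros Hab Hg x Hx.
  destruct (cc_max a b (fun y => Rabs (g y)) Hab) as [x0 [Hx0 HM]].
  intros y; apply cR_abs; apply Hg.
  unfold sup_norm. destruct (Lub_Rbar_correct (fun r => exists x, a <= x <= b /\ r = Rabs (g x))) as [Hub Hl].
  assert (Hle : Rbar_le (Lub_Rbar (fun r => exists x, a <= x <= b /\ r = Rabs (g x))) (Rabs (g x0))).
  { apply Hl. intros r [y [Hy ->]]. simpl. apply HM; auto. }
  assert (Hge : Rbar_le (Rabs (g x)) (Lub_Rbar (fun r => exists x, a <= x <= b /\ r = Rabs (g x)))).
  { apply Hub. exists x; auto. }
  destruct (Lub_Rbar _); simpl in *; tauto.
Qed.

Lemma C1_cont a b F : C1_on a b F -> cont_on a b F.
Proof.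
  intros [F' [_ HF]] x Hx. apply filterlim_locally. intros eps.
  specialize (HF x Hx). pose proof (proj1 (@filterlim_locally R R_UniformSpace _ (within_filter _ _ _ (@filter_filter _ _ (locally_filter x))) _ (F' x)) HF) as HF'. clear HF. rename HF' into HF.
  destruct (HF (mkposreal 1 Rlt_0_1)) as [d1 Hd1].
  assert (Hk : 0 < eps / (Rabs (F' x) + 1)).
  { apply Rdiv_lt_0_compat. apply cond_pos. generalize (Rabs_pos (F' x)); lra. }
  exists (mkposreal _ (Rmin_pos _ _ (cond_pos d1) Hk)). intros y Hy Hyi.
  rb Hy. simpl in Hy. apply ball_R.
  destruct (Req_dec y x) as [->|Hne]. rewrite Rminus_diag, Rabs_R0; apply cond_pos.
  assert (Hq := Hd1 y). simpl in Hq.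
  assert (Hq' : Rabs ((F y - F x) / (y - x) - F' x) < 1).
  { apply Hq. apply ball_R. eapply Rlt_le_trans; [apply Hy| apply Rmin_l]. split; auto. }
  assert (E : F y - F x = (F y - F x) / (y - x) * (y - x)) by (field; lra).
  rewrite E, Rabs_mult.
  set (q := (F y - F x) / (y - x)) in *.
  assert (Hq2 : Rabs q < Rabs (F' x) + 1).
  { replace q with ((q - F' x) + F' x) by ring. eapply Rle_lt_trans. apply Rabs_triang. lra. }
  assert (Hy2 : Rabs (y - x) < eps / (Rabs (F' x) + 1)).
  { eapply Rlt_le_trans; [apply Hy | apply Rmin_r]. }
  assert (Hpos : 0 < Rabs (F' x) + 1) by (generalize (Rabs_pos (F' x)); lra).
  apply Rle_lt_trans with ((Rabs (F' x) + 1) * Rabs (y - x)).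
  apply Rmult_le_compat_r. apply Rabs_pos. lra.
  apply Rmult_lt_reg_l with (/ (Rabs (F' x) + 1)). apply Rinv_0_lt_compat; lra.
  rewrite <- Rmult_assoc, Rinv_l by lra. unfold Rdiv in Hy2. lra.
Qed.

Lemma sq_lt_sqrt v s : 0 <= s -> Rabs v < sqrt s -> v ^ 2 < s.
Proof.
  intros Hs H. rewrite <- (pow2_sqrt s) by auto. rewrite <- (pow2_abs v).
  generalize (Rabs_pos v). intros. nra.
Qed.

Lemma g_lip lam u w : 0 < lam -> u ^ 2 < 2 * lam / 3 -> w ^ 2 < 2 * lam / 3 ->
  Rabs (u - w) * (3 / 4 * (2 * lam / 3 - u ^ 2)) <=
  Rabs (u * (/ 2 * u ^ 2 - lam) - w * (/ 2 * w ^ 2 - lam)).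
Proof.
  intros Hl Hu Hw.
  replace (u * (/ 2 * u ^ 2 - lam) - w * (/ 2 * w ^ 2 - lam)) with
    ((u - w) * ((u ^ 2 + u * w + w ^ 2) / 2 - lam)) by field.
  rewrite Rabs_mult. apply Rmult_le_compat_l. apply Rabs_pos.
  assert (Hq : 0 <= (u - w) ^ 2) by (apply pow2_ge_0).
  rewrite Rabs_left1. 
  all: nra.
Qed.

Lemma vbar_cont a b lam F v : 0 < lam -> cont_on a b F ->
  (forall x, a <= x <= b -> Rabs (v x) < sqrt (2 * lam / 3) /\ v x * (/ 2 * v x ^ 2 - lam) = F x) ->
  cont_on a b v.
Proof.
  intros Hl HF Hv x Hx. apply filterlim_locally. intros eps.
  destruct (Hv x Hx) as [Hx1 Hx2].
  assert (Hs : 0 <= 2 * lam / 3) by lra.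
  assert (Hux := sq_lt_sqrt _ _ Hs Hx1).
  set (k := 3 / 4 * (2 * lam / 3 - v x ^ 2)).
  assert (Hk : 0 < k) by (unfold k; lra).
  assert (Hek : 0 < eps * k) by (apply Rmult_lt_0_compat; auto; apply cond_pos).
  generalize (proj1 (filterlim_locally _ _) (HF x Hx) (mkposreal _ Hek)).
  unfold within. apply filter_imp. intros y Hy Hyi. specialize (Hy Hyi).
  rb Hy. apply ball_R. simpl in Hy.
  destruct (Hv y Hyi) as [Hy1 Hy2].
  assert (Huy := sq_lt_sqrt _ _ Hs Hy1).
  assert (L := g_lip lam (v x) (v y) Hl Hux Huy). fold k in L.
  rewrite Hx2, Hy2 in L. rewrite Rabs_minus_sym in L.
  rewrite (Rabs_minus_sym (F x)) in L. apply Rmult_lt_reg_r with k; auto. simpl in Hy. lra.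
Qed.

Lemma cont_on_plus_glob a b v h : cont_on a b v -> (forall x, continuous h x) ->
  cont_on a b (fun x => v x + h x).
Proof.
  intros Hv Hh x Hx. apply filterlim_locally. intros eps.
  assert (He : 0 < eps / 2) by (generalize (cond_pos eps); lra).
  generalize (filter_and _ _ (proj1 (filterlim_locally _ _) (Hv x Hx) (mkposreal _ He))
     (@filter_le_within _ _ (@filter_filter _ _ (locally_filter x)) (Icc a b) _ (proj1 (filterlim_locally _ _) (Hh x) (mkposreal _ He)))).
  apply filter_imp. intros y [H1 H2]. rb H1. rb H2. apply ball_R.
  simpl in *. replace (v y + h y - (v x + h x)) with ((v y - v x) + (h y - h x)) by ring.
  eapply Rle_lt_trans. apply Rabs_triang. lra.
Qed.

Lemma RInt_const_R (c a b : R) : RInt (fun _ => c) a b = c * (b - a).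
Proof. rewrite RInt_const. unfold scal; simpl; unfold mult; simpl. ring. Qed.

Lemma Chasles_R (g : R -> R) a b c : ex_RInt g a b -> ex_RInt g b c ->
  RInt g a b + RInt g b c = RInt g a c.
Proof. intros. exact (RInt_Chasles (V:=R_CompleteNormedModule) g a b c H H0). Qed.

Lemma L1 (g : R -> R) a al be b m : a <= al -> al <= be -> be <= b -> ex_RInt g a b ->
  (forall x, a <= x <= b -> 0 <= g x) -> (forall x, al <= x <= be -> m <= g x) ->
  m * (be - al) <= RInt g a b.
Proof.
  intros H1 H2 H3 He Hp Hm.
  assert (e1 : ex_RInt g a al) by (apply (ex_RInt_Chasles_1 (V:=R_CompleteNormedModule)) with b; lra || auto).
  assert (e23 : ex_RInt g al b) by (apply (ex_RInt_Chasles_2 (V:=R_CompleteNormedModule)) with a; lra || auto).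
  assert (e2 : ex_RInt g al be) by (apply (ex_RInt_Chasles_1 (V:=R_CompleteNormedModule)) with b; lra || auto).
  assert (e3 : ex_RInt g be b) by (apply (ex_RInt_Chasles_2 (V:=R_CompleteNormedModule)) with al; lra || auto).
  rewrite <- (Chasles_R g a al b e1 e23), <- (Chasles_R g al be b e2 e3).
  assert (0 <= RInt g a al) by (apply RInt_ge_0; auto; intros; apply Hp; lra).
  assert (0 <= RInt g be b) by (apply RInt_ge_0; auto; intros; apply Hp; lra).
  assert (Hc : RInt (fun _ => m) al be <= RInt g al be).
  { apply RInt_le; auto. apply (ex_RInt_const (V:=R_CompleteNormedModule)). intros; apply Hm; lra. }
  rewrite RInt_const_R in Hc. lra.
Qed.

Lemma RInt_zero (g : R -> R) a b : a <= b -> (forall x, a < x < b -> g x = 0) -> RInt g a b = 0.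
Proof.
  intros Hab H. rewrite (RInt_ext g (fun _ => 0)). rewrite RInt_const_R. apply Rmult_0_l.
  rewrite Rmin_left, Rmax_right by lra. auto.
Qed.

Lemma L2 (g : R -> R) a al be b M : a <= al -> al <= be -> be <= b -> ex_RInt g a b ->
  (forall x, a <= x <= b -> g x <= M) -> (forall x, a <= x <= b -> (x < al \/ be < x) -> g x = 0) ->
  RInt g a b <= M * (be - al).
Proof.
  intros H1 H2 H3 He Hp Hm.
  assert (e1 : ex_RInt g a al) by (apply (ex_RInt_Chasles_1 (V:=R_CompleteNormedModule)) with b; lra || auto).
  assert (e23 : ex_RInt g al b) by (apply (ex_RInt_Chasles_2 (V:=R_CompleteNormedModule)) with a; lra || auto).
  assert (e2 : ex_RInt g al be) by (apply (ex_RInt_Chasles_1 (V:=R_CompleteNormedModule)) with b; lra || auto).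
  assert (e3 : ex_RInt g be b) by (apply (ex_RInt_Chasles_2 (V:=R_CompleteNormedModule)) with al; lra || auto).
  rewrite <- (Chasles_R g a al b e1 e23), <- (Chasles_R g al be b e2 e3).
  rewrite (RInt_zero g a al), (RInt_zero g be b); try lra; try (intros; apply Hm; lra).
  assert (Hc : RInt g al be <= RInt (fun _ => M) al be).
  { apply RInt_le; auto. apply (ex_RInt_const (V:=R_CompleteNormedModule)). intros; apply Hp; lra. }
  rewrite RInt_const_R in Hc. lra.
Qed.

Lemma key_id lam v h :
  Hfun lam (v + h) - v * (/ 2 * v ^ 2 - lam) * (v + h) - (Hfun lam v - v * (/ 2 * v ^ 2 - lam) * v)
  = h ^ 2 * ((3 * v ^ 2 / 2 - lam) / 2 + v * h / 2 + h ^ 2 / 8).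
Proof. unfold Hfun. field. Qed.

Lemma key_neg lam v h c0 B : 0 < c0 -> 0 <= B -> (3 * v ^ 2 / 2 - lam) / 2 <= - c0 ->
  Rabs v <= B -> Rabs h <= Rmin 1 (c0 / (4 * (B + 1))) ->
  Hfun lam (v + h) - v * (/ 2 * v ^ 2 - lam) * (v + h) - (Hfun lam v - v * (/ 2 * v ^ 2 - lam) * v)
  <= - (c0 / 2) * h ^ 2.
Proof.
  intros Hc HB HA Hv Hh. rewrite key_id.
  set (d := Rmin 1 (c0 / (4 * (B + 1)))) in *.
  assert (Hd1 : d <= 1) by apply Rmin_l.
  assert (Hd2 : d <= c0 / (4 * (B + 1))) by apply Rmin_r.
  assert (Hd3 : d * (4 * (B + 1)) <= c0).
  { apply Rmult_le_reg_r with (/ (4 * (B + 1))). apply Rinv_0_lt_compat; lra.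
    rewrite Rmult_assoc, Rinv_r by lra. unfold Rdiv in Hd2. lra. }
  assert (Hh0 : 0 <= Rabs h) by apply Rabs_pos.
  assert (Hvh : Rabs (v * h) <= B * d) by (rewrite Rabs_mult; apply Rmult_le_compat; auto; apply Rabs_pos).
  assert (Hvh2 : v * h <= B * d) by (generalize (Rle_abs (v * h)); lra).
  assert (Hh2 : h ^ 2 <= d) by (rewrite <- pow2_abs; nra).
  assert (Hbr : (3 * v ^ 2 / 2 - lam) / 2 + v * h / 2 + h ^ 2 / 8 <= - (c0 / 2)) by nra.
  assert (0 <= h ^ 2) by apply pow2_ge_0.
  nra.
Qed.

Lemma key_pos lam v h : 0 < lam -> v ^ 2 < 2 * lam / 3 ->
  h ^ 4 / 16 - 2 * lam * h ^ 2 <=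
  Hfun lam (v + h) - v * (/ 2 * v ^ 2 - lam) * (v + h) - (Hfun lam v - v * (/ 2 * v ^ 2 - lam) * v).
Proof.
  intros Hl Hv. rewrite key_id.
  assert (E : h ^ 2 * ((3 * v ^ 2 / 2 - lam) / 2 + v * h / 2 + h ^ 2 / 8) - (h ^ 4 / 16 - 2 * lam * h ^ 2)
     = h ^ 2 * ((h / 4 + v) ^ 2 + (3 * lam / 2 - v ^ 2 / 4))) by field.
  assert (0 <= h ^ 2) by apply pow2_ge_0.
  assert (0 <= (h / 4 + v) ^ 2) by apply pow2_ge_0.
  assert (0 <= h ^ 2 * ((h / 4 + v) ^ 2 + (3 * lam / 2 - v ^ 2 / 4))).
  { apply Rmult_le_pos; auto. lra. }
  lra.
Qed.

Lemma exp_le' x y : x <= y -> exp x <= exp y.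
Proof. intros H. destruct (Rle_lt_or_eq_dec _ _ H). left; apply exp_increasing; auto. subst; lra. Qed.

Lemma Rpower_pos' y p : 0 < Rpower y p.
Proof. unfold Rpower; apply exp_pos. Qed.

Lemma rpow_nonneg y p : 0 <= rpow y p.
Proof. unfold rpow. destruct Rle_dec. lra. left; apply Rpower_pos'. Qed.

Lemma Rpower_le_self y p : 0 < y <= 1 -> 1 <= p -> Rpower y p <= y.
Proof.
  intros Hy Hp. unfold Rpower. rewrite <- (exp_ln y) at 2 by lra.
  apply exp_le'. assert (ln y <= 0) by (rewrite <- ln_1; apply ln_le; lra). nra.
Qed.

Lemma rpow_bound y M p : 0 <= y <= M -> 0 < M -> 0 <= p -> rpow y p <= Rpower M p.
Proof.
  intros Hy HM Hp. unfold rpow. destruct Rle_dec. left; apply Rpower_pos'.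
  apply Rle_Rpower_l; lra.
Qed.

Lemma rpow_cont p y0 : 1 <= p -> continuous (fun y => rpow y p) y0.
Proof.
  intros Hp. destruct (Rtotal_order y0 0) as [Hn|[Hz|Hpos]].
  - apply continuous_ext_loc with (fun _ => 0).
    + assert (He : 0 < - y0) by lra. exists (mkposreal _ He). intros y Hy. rb Hy. simpl in Hy.
      unfold rpow. destruct Rle_dec; auto. unfold Rabs in Hy; destruct Rcase_abs in Hy; lra.
    + apply cR_const.
  - subst. apply filterlim_locally. intros eps.
    assert (He : 0 < Rmin 1 eps) by (apply Rmin_pos; [lra| apply cond_pos]).
    exists (mkposreal _ He). intros y Hy. rb Hy. simpl in Hy. apply ball_R.
    assert (H0 : rpow 0 p = 0) by (unfold rpow; destruct Rle_dec; lra).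
    rewrite H0, Rminus_0_r. rewrite Rminus_0_r in Hy.
    generalize (Rmin_l 1 eps) (Rmin_r 1 eps); intros.
    unfold rpow. destruct Rle_dec. rewrite Rabs_R0; apply cond_pos.
    rewrite Rabs_right by (left; apply Rpower_pos').
    eapply Rle_lt_trans. apply Rpower_le_self; auto.
    unfold Rabs in Hy; destruct Rcase_abs in Hy; lra.
    unfold Rabs in Hy; destruct Rcase_abs in Hy; lra.
  - apply continuous_ext_loc with (fun y => Rpower y p).
    + exists (mkposreal _ Hpos). intros y Hy. rb Hy. simpl in Hy.
      unfold rpow. destruct Rle_dec; auto. unfold Rabs in Hy; destruct Rcase_abs in Hy; lra.
    + apply continuity_pt_filterlim. apply derivable_continuous_pt.
      exists (p * Rpower y0 (p - 1)). apply derivable_pt_lim_power; auto.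
Qed.

Definition clamp01 (u : R) := (Rabs u - Rabs (u - 1) + 1) / 2.
Definition T (dl c x : R) := clamp01 ((2 * dl - Rabs (x - c)) / dl).

Lemma clamp01_range u : 0 <= clamp01 u <= 1.
Proof. unfold clamp01, Rabs; repeat destruct Rcase_abs; lra. Qed.
Lemma clamp01_one u : 1 <= u -> clamp01 u = 1.
Proof. intros; unfold clamp01, Rabs; repeat destruct Rcase_abs; lra. Qed.
Lemma clamp01_zero u : u <= 0 -> clamp01 u = 0.
Proof. intros; unfold clamp01, Rabs; repeat destruct Rcase_abs; lra. Qed.

Lemma T_cont dl c x : continuous (T dl c) x.
Proof.
  unfold T, clamp01. apply cR_mult; [|apply cR_const].
  apply cR_plus; [|apply cR_const]. apply cR_minus.
  - apply cR_abs. apply cR_mult; [|apply cR_const]. apply cR_minus. apply cR_const.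
    apply cR_abs. apply cR_minus. apply cR_id. apply cR_const.
  - apply cR_abs. apply cR_minus; [|apply cR_const]. apply cR_mult; [|apply cR_const]. apply cR_minus. apply cR_const.
    apply cR_abs. apply cR_minus. apply cR_id. apply cR_const.
Qed.

Lemma T_range dl c x : 0 <= T dl c x <= 1.
Proof. apply clamp01_range. Qed.
Lemma T_one dl c x : 0 < dl -> Rabs (x - c) <= dl -> T dl c x = 1.
Proof.
  intros Hd Hx. unfold T. apply clamp01_one.
  apply Rmult_le_reg_r with dl; auto. unfold Rdiv. rewrite Rmult_assoc, Rinv_l by lra. lra.
Qed.
Lemma T_zero dl c x : 0 < dl -> 2 * dl <= Rabs (x - c) -> T dl c x = 0.
Proof.
  intros Hd Hx. unfold T. apply clamp01_zero.
  apply Rmult_le_reg_r with dl; auto. unfold Rdiv. rewrite Rmult_assoc, Rinv_l by lra. lra.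
Qed.

Lemma LpT a b p mu d : a < b -> 1 <= p -> 0 < mu -> 0 < d ->
  exists dl, 0 < dl /\ dl <= (b - a) / 8 /\
    Lp_norm a b p (fun x => mu * T dl ((a + b) / 2) x) < d.
Proof.
  intros Hab Hp Hmu Hd.
  set (Q := Rpower d p). set (P := Rpower mu p).
  assert (HQ : 0 < Q) by apply Rpower_pos'. assert (HP : 0 < P) by apply Rpower_pos'.
  assert (Hq8 : 0 < Q / (8 * P)) by (apply Rdiv_lt_0_compat; lra).
  set (dl := Rmin ((b - a) / 8) (Q / (8 * P))).
  assert (Hdl : 0 < dl) by (apply Rmin_pos; lra).
  assert (Hdl1 : dl <= (b - a) / 8) by apply Rmin_l.
  assert (Hdl2 : dl <= Q / (8 * P)) by apply Rmin_r.
  exists dl. split; auto. split; auto.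
  set (c := (a + b) / 2).
  set (g := fun x => rpow (Rabs (mu * T dl c x)) p).
  assert (Hg : ex_RInt g a b).
  { apply (ex_RInt_continuous (V:=R_CompleteNormedModule)). intros z _.
    unfold g. apply cR_comp with (g := fun y => rpow y p); [|apply rpow_cont; auto].
    apply cR_abs. apply cR_mult. apply cR_const. apply T_cont. }
  assert (HI0 : 0 <= RInt g a b) by (apply RInt_ge_0; [lra|auto|intros; apply rpow_nonneg]).
  assert (HI1 : RInt g a b <= P * ((c + 2 * dl) - (c - 2 * dl))).
  { apply L2; auto; unfold c in *; try lra.
    - intros x _. unfold g. apply rpow_bound; auto; try lra.
      generalize (T_range dl ((a+b)/2) x); intros. rewrite Rabs_right by (apply Rle_ge; apply Rmult_le_pos; lra). split. apply Rmult_le_pos; lra. rewrite <- (Rmult_1_r mu) at 2. apply Rmult_le_compat_l; lra.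
    - intros x _ Hx. unfold g. rewrite T_zero; auto.
      rewrite Rmult_0_r, Rabs_R0. unfold rpow. destruct Rle_dec; lra.
      unfold Rabs; destruct Rcase_abs; lra. }
  assert (HPQ : P * (4 * dl) <= Q / 2).
  { apply Rle_trans with (P * (4 * (Q / (8 * P)))). apply Rmult_le_compat_l; lra.
    right. field. lra. }
  unfold Lp_norm. fold g. unfold rpow at 1. destruct Rle_dec. auto.
  replace d with (Rpower Q (/ p)).
  apply Rlt_Rpower_l. apply Rinv_0_lt_compat; lra. split. lra. lra.
  unfold Q. rewrite Rpower_mult. rewrite Rinv_r by lra. apply Rpower_1; auto.
Qed.

Lemma RInt_minus_R (f g : R -> R) a b : ex_RInt f a b -> ex_RInt g a b ->
  RInt (fun x => f x - g x) a b = RInt f a b - RInt g a b.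
Proof. intros. exact (RInt_minus (V:=R_CompleteNormedModule) f g a b H H0). Qed.
Lemma RInt_scal_R (f : R -> R) a b k : ex_RInt f a b ->
  RInt (fun x => k * f x) a b = k * RInt f a b.
Proof. intros. exact (RInt_scal (V:=R_CompleteNormedModule) f a b k H). Qed.

Theorem proposition3 (a b lam : R) (theta F vbar : R -> R) :
  a < b -> 0 < lam ->
  cont_on a b theta ->
  (forall x, a <= x <= b -> 0 < theta x) ->
  C1_on a b F ->
  F a = 0 -> F b = 0 ->
  (forall x, a < x < b -> F x <> 0) ->
  sup_norm a b F < Rpower (2 * lam / 3) (3 / 2) ->
  (forall x, a <= x <= b ->
     Rabs (vbar x) < sqrt (2 * lam / 3) /\
     vbar x * (/ 2 * vbar x ^ 2 - lam) = F x) ->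
  is_local_max (C0 a b) (sup_norm a b) (Kfun a b lam theta F) vbar /\
  (forall p, 1 <= p < 4 ->
     ~ is_local_max (C0 a b) (Lp_norm a b p) (Kfun a b lam theta F) vbar /\
     ~ is_local_min (C0 a b) (Lp_norm a b p) (Kfun a b lam theta F) vbar).
Proof.
  intros Hab Hl Hth Hthpos HC1 Fa Fb _ _ Hv.
  assert (Hab' : a <= b) by lra.
  assert (HFc := C1_cont _ _ _ HC1).
  assert (Hvc := vbar_cont a b lam F vbar Hl HFc Hv).
  assert (Hs : 0 <= 2 * lam / 3) by lra.
  assert (Hv2 : forall x, a <= x <= b -> vbar x ^ 2 < 2 * lam / 3).
  { intros x Hx. apply sq_lt_sqrt; auto. apply Hv; auto. }
  assert (HFv : forall x, a <= x <= b -> F x = vbar x * (/ 2 * vbar x ^ 2 - lam)).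
  { intros x Hx. symmetry; apply Hv; auto. }
  assert (Hzero : forall x, a <= x <= b -> F x = 0 -> vbar x = 0).
  { intros x Hx HF0. rewrite HFv in HF0 by auto. apply Rmult_integral in HF0.
    destruct HF0; auto. specialize (Hv2 x Hx). lra. }
  assert (HXv : C0 a b vbar).
  { split; auto. split; apply Hzero; auto; lra. }
  assert (ccv := cont_on_cc _ _ _ Hab' Hvc).
  assert (ccth := cont_on_cc _ _ _ Hab' Hth).
  assert (ccF := cont_on_cc _ _ _ Hab' HFc).
  assert (HHc : forall y, continuous (Hfun lam) y) by (intros; apply (cR_H lam (fun y => y)); apply cR_id).
  set (Ig := fun (w : R -> R) x => theta x * (Hfun lam (w x) - F x * w x)).
  assert (ccI : forall w, cc a b w -> ex_RInt (Ig w) a b).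
  { intros w Hw. apply cc_ex_RInt; auto. unfold Ig. apply cc_mult; auto.
    apply cc_minus. apply cc_comp; auto. apply cc_mult; auto. }
  destruct (cc_max a b (fun x => vbar x ^ 2) Hab') as [x1 [Hx1 Hm2]].
  { intros y; apply cR_pow; apply ccv. }
  set (m2 := vbar x1 ^ 2) in *.
  assert (Hm2s : m2 < 2 * lam / 3) by (apply Hv2; auto).
  set (c0 := (lam - 3 * m2 / 2) / 2).
  assert (Hc0 : 0 < c0) by (unfold c0; lra).
  set (B := 1 + lam).
  assert (HB : 0 <= B) by (unfold B; lra).
  assert (HvB : forall x, a <= x <= b -> Rabs (vbar x) <= B).
  { intros x Hx. specialize (Hv2 x Hx). rewrite <- pow2_abs in Hv2.
    generalize (Rabs_pos (vbar x)); intros. unfold B. nra. }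
  assert (HA : forall x, a <= x <= b -> (3 * vbar x ^ 2 / 2 - lam) / 2 <= - c0).
  { intros x Hx. specialize (Hm2 x Hx). unfold c0. lra. }
  set (d0 := Rmin 1 (c0 / (4 * (B + 1)))).
  assert (Hd0 : 0 < d0).
  { apply Rmin_pos. lra. apply Rdiv_lt_0_compat; lra. }
  destruct (cc_min a b theta Hab' ccth) as [xm [Hxm Hthm]].
  destruct (cc_max a b theta Hab' ccth) as [xM [HxM HthM]].
  set (tm := theta xm) in *. set (tM := theta xM) in *.
  assert (Htm : 0 < tm) by (apply Hthpos; auto).
  assert (Dform : forall x h, a <= x <= b ->
    Ig (fun y => vbar y + h) x - Ig vbar x =
    theta x * (Hfun lam (vbar x + h) - vbar x * (/ 2 * vbar x ^ 2 - lam) * (vbar x + h)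
        - (Hfun lam (vbar x) - vbar x * (/ 2 * vbar x ^ 2 - lam) * vbar x))).
  { intros x h Hx. unfold Ig. rewrite (HFv x Hx). ring. }
  assert (PN : forall x h, a <= x <= b -> Rabs h <= d0 ->
    Ig (fun y => vbar y + h) x - Ig vbar x <= - (theta x * (c0 / 2) * h ^ 2)).
  { intros x h Hx Hh. rewrite Dform by auto.
    assert (K := key_neg lam (vbar x) h c0 B Hc0 HB (HA x Hx) (HvB x Hx) Hh).
    specialize (Hthpos x Hx). 
    replace (- (theta x * (c0 / 2) * h ^ 2)) with (theta x * (- (c0 / 2) * h ^ 2)) by ring.
    apply Rmult_le_compat_l; lra. }
  assert (PP : forall x h, a <= x <= b ->
    tm / 16 * h ^ 4 - 2 * lam * tM * h ^ 2 <= Ig (fun y => vbar y + h) x - Ig vbar x).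
  { intros x h Hx. rewrite Dform by auto.
    assert (K := key_pos lam (vbar x) h Hl (Hv2 x Hx)).
    specialize (Hthpos x Hx). specialize (Hthm x Hx). specialize (HthM x Hx).
    assert (H4 : 0 <= h ^ 4) by (replace (h ^ 4) with ((h ^ 2) ^ 2) by ring; apply pow2_ge_0).
    assert (H2 : 0 <= h ^ 2) by apply pow2_ge_0.
    apply Rle_trans with (theta x * (h ^ 4 / 16 - 2 * lam * h ^ 2)).
    - assert (tm * h ^ 4 <= theta x * h ^ 4) by (apply Rmult_le_compat_r; auto).
      assert (theta x * (lam * h ^ 2) <= tM * (lam * h ^ 2)) by (apply Rmult_le_compat_r; nra).
      nra.
    - apply Rmult_le_compat_l; lra. }
  split.
  -
    split; auto. exists d0. split; auto. intros w [Hw _] Hn.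
    assert (ccw := cont_on_cc _ _ _ Hab' Hw).
    assert (Hpt : forall x, a <= x <= b -> Rabs (w x - vbar x) < d0).
    { intros x Hx. eapply Rle_lt_trans; [|apply Hn].
      apply (sup_ge a b (fun x => w x - vbar x)); auto. apply cc_minus; auto. }
    unfold Kfun. fold (Ig w) (Ig vbar).
    apply RInt_le; auto. intros x Hx.
    assert (Hx' : a <= x <= b) by lra.
    assert (E : Ig w x = Ig (fun y => vbar y + (w x - vbar x)) x) by (unfold Ig; replace (vbar x + (w x - vbar x)) with (w x) by ring; reflexivity).
    rewrite E.
    assert (P := PN x (w x - vbar x) Hx' (Rlt_le _ _ (Hpt x Hx'))).
    assert (0 <= theta x * (c0 / 2) * (w x - vbar x) ^ 2).
    { apply Rmult_le_pos. apply Rmult_le_pos; [apply Rlt_le, Hthpos; auto| lra]. apply pow2_ge_0. }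
    lra.
  - intros p [Hp1 Hp4].
    set (c := (a + b) / 2).
    assert (Wmk : forall mu dl, 0 < dl -> dl <= (b - a) / 8 ->
       C0 a b (fun x => vbar x + mu * T dl c x) /\
       (fun x => (vbar x + mu * T dl c x) - vbar x) = (fun x => mu * T dl c x) /\
       cc a b (fun x => vbar x + mu * T dl c x)).
    { intros mu dl Hdl Hdl8. split; [|split].
      - split. apply cont_on_plus_glob; auto. intros; apply cR_mult. apply cR_const. apply T_cont.
        destruct HXv as [_ [Hva Hvb]]. split.
        rewrite Hva, T_zero; auto. ring. unfold c; unfold Rabs; destruct Rcase_abs; lra.
        rewrite Hvb, T_zero; auto. ring. unfold c; unfold Rabs; destruct Rcase_abs; lra.
      - apply functional_extensionality; intros; ring.
      - apply cc_plus; auto. apply cc_glob; auto. intros; apply cR_mult. apply cR_const. apply T_cont. }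
    assert (ccq : forall mu dl k, cc a b (fun x => (mu * T dl c x) ^ k)).
    { intros. apply cc_glob; auto. intros; apply cR_pow. apply cR_mult. apply cR_const. apply T_cont. }
    split.
    + intros [_ [d [Hd Hloc]]].
      set (mu := 64 * lam * tM / tm + 1).
      assert (HtMpos : 0 < tM) by (apply Hthpos; auto).
      assert (Hmu1 : 1 <= mu).
      { unfold mu. assert (0 <= 64 * lam * tM / tm) by (apply Rle_mult_inv_pos; nra). lra. }
      assert (Hmutm : tm * mu = 64 * lam * tM + tm) by (unfold mu; field; lra).
      destruct (LpT a b p mu d Hab Hp1 ltac:(lra) Hd) as [dl [Hdl [Hdl8 HLp]]].
      fold c in HLp.
      destruct (Wmk mu dl Hdl Hdl8) as [HW [Heq ccw]].
      assert (HK := Hloc (fun x => vbar x + mu * T dl c x) HW ltac:(cbv beta; rewrite Heq; exact HLp)).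
      unfold Kfun in HK. fold (Ig (fun x => vbar x + mu * T dl c x)) (Ig vbar) in HK.
      set (w := fun x => vbar x + mu * T dl c x) in *.
      assert (eW := ccI w ccw). assert (eV := ccI vbar ccv).
      set (q4 := fun x => (mu * T dl c x) ^ 4). set (q2 := fun x => (mu * T dl c x) ^ 2).
      assert (e4 : ex_RInt q4 a b) by (apply cc_ex_RInt; auto; apply ccq).
      assert (e2 : ex_RInt q2 a b) by (apply cc_ex_RInt; auto; apply ccq).
      assert (eG1 : ex_RInt (fun x => tm / 16 * q4 x) a b) by (apply cc_ex_RInt; auto; apply cc_mult; [apply cc_glob; auto; intros; apply cR_const | apply ccq]).
      assert (eG2 : ex_RInt (fun x => 2 * lam * tM * q2 x) a b) by (apply cc_ex_RInt; auto; apply cc_mult; [apply cc_glob; auto; intros; apply cR_const | apply ccq]).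
      assert (HG : RInt (fun x => tm / 16 * q4 x - 2 * lam * tM * q2 x) a b <= RInt (fun x => Ig w x - Ig vbar x) a b).
      { apply RInt_le; auto.
        - apply (ex_RInt_minus (V:=R_CompleteNormedModule)); auto.
        - apply (ex_RInt_minus (V:=R_CompleteNormedModule)); auto.
        - intros x Hx. unfold w, q4, q2. apply PP. lra. }
      rewrite RInt_minus_R, RInt_minus_R, RInt_scal_R, RInt_scal_R in HG by auto.
      assert (H4 : mu ^ 4 * ((c + dl) - (c - dl)) <= RInt q4 a b).
      { apply L1; auto; unfold c in *; try lra.
        - intros x _. unfold q4. replace ((mu * T dl ((a + b) / 2) x) ^ 4) with (((mu * T dl ((a + b) / 2) x) ^ 2) ^ 2) by ring. apply pow2_ge_0.
        - intros x Hx. unfold q4. rewrite T_one; auto. right; ring.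
          unfold Rabs; destruct Rcase_abs; lra. }
      assert (H2 : RInt q2 a b <= mu ^ 2 * ((c + 2 * dl) - (c - 2 * dl))).
      { apply L2; auto; unfold c in *; try lra.
        - intros x _. unfold q2. generalize (T_range dl ((a + b) / 2) x). intros.
          rewrite Rpow_mult_distr. assert (T dl ((a + b) / 2) x ^ 2 <= 1) by nra.
          assert (0 <= mu ^ 2) by apply pow2_ge_0. nra.
        - intros x _ Hx. unfold q2. rewrite T_zero; auto. ring.
          unfold Rabs; destruct Rcase_abs; lra. }
      assert (Hfin : 0 < tm / 16 * (mu ^ 4 * (c + dl - (c - dl))) - 2 * lam * tM * (mu ^ 2 * (c + 2 * dl - (c - 2 * dl)))).
      { replace (tm / 16 * (mu ^ 4 * (c + dl - (c - dl))) - 2 * lam * tM * (mu ^ 2 * (c + 2 * dl - (c - 2 * dl))))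
          with (mu ^ 2 * dl / 8 * (tm * mu * mu - 64 * lam * tM)) by field.
        apply Rmult_lt_0_compat. apply Rmult_lt_0_compat; [|lra]. apply Rmult_lt_0_compat; [nra|lra].
        rewrite Hmutm. nra. }
      assert (tm / 16 * (mu ^ 4 * (c + dl - (c - dl))) <= tm / 16 * RInt q4 a b) by (apply Rmult_le_compat_l; lra).
      assert (2 * lam * tM * RInt q2 a b <= 2 * lam * tM * (mu ^ 2 * (c + 2 * dl - (c - 2 * dl)))).
      { apply Rmult_le_compat_l; auto. nra. }
      lra.
    + intros [_ [d [Hd Hloc]]].
      set (mu := d0).
      destruct (LpT a b p mu d Hab Hp1 Hd0 Hd) as [dl [Hdl [Hdl8 HLp]]].
      fold c in HLp.
      destruct (Wmk mu dl Hdl Hdl8) as [HW [Heq ccw]].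
      assert (HK := Hloc (fun x => vbar x + mu * T dl c x) HW ltac:(cbv beta; rewrite Heq; exact HLp)).
      unfold Kfun in HK. fold (Ig (fun x => vbar x + mu * T dl c x)) (Ig vbar) in HK.
      set (w := fun x => vbar x + mu * T dl c x) in *.
      assert (eW := ccI w ccw). assert (eV := ccI vbar ccv).
      assert (H1 : tm * (c0 / 2) * mu ^ 2 * ((c + dl) - (c - dl)) <= RInt (fun x => Ig vbar x - Ig w x) a b).
      { apply L1; auto; unfold c in *; try lra.
        - apply (ex_RInt_minus (V:=R_CompleteNormedModule)); auto.
        - intros x Hx. unfold w. generalize (T_range dl ((a + b) / 2) x); intros.
          assert (Hh : Rabs (mu * T dl ((a + b) / 2) x) <= d0).
          { rewrite Rabs_mult, Rabs_right, Rabs_right by (apply Rle_ge; unfold mu; lra). unfold mu. nra. }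
          assert (P := PN x _ Hx Hh).
          assert (0 <= theta x * (c0 / 2) * (mu * T dl ((a + b) / 2) x) ^ 2).
          { apply Rmult_le_pos. apply Rmult_le_pos; [apply Rlt_le, Hthpos; auto| lra]. apply pow2_ge_0. }
          change (Ig (fun x0 : R => vbar x0 + mu * T dl ((a + b) / 2) x0) x) with (Ig (fun y : R => vbar y + mu * T dl ((a + b) / 2) x) x). lra.
        - intros x Hx.
          assert (Hx' : a <= x <= b) by lra.
          assert (HT : T dl ((a + b) / 2) x = 1) by (apply T_one; auto; unfold Rabs; destruct Rcase_abs; lra).
          change (Ig w x) with (Ig (fun y => vbar y + mu * T dl ((a + b) / 2) x) x). rewrite HT.
          assert (Hh : Rabs (mu * 1) <= d0) by (rewrite Rmult_1_r, Rabs_right; unfold mu; lra).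
          assert (P := PN x _ Hx' Hh).
          assert (tm * (c0 / 2) * mu ^ 2 <= theta x * (c0 / 2) * (mu * 1) ^ 2).
          { rewrite Rmult_1_r. apply Rmult_le_compat_r. apply pow2_ge_0. apply Rmult_le_compat_r. lra. apply Hthm; auto. }
          lra. }
      rewrite RInt_minus_R in H1 by auto.
      assert (0 < tm * (c0 / 2) * mu ^ 2 * ((c + dl) - (c - dl))).
      { apply Rmult_lt_0_compat; [|lra]. apply Rmult_lt_0_compat. apply Rmult_lt_0_compat; lra. unfold mu; nra. }
      lra.
Qed.
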